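(* Let $G$ be the infinite king grid and let $C\subseteq\mathbb{Z}^2$ be a solid-locating-dominating code in $G$. Then for all $i,j\in\mathbb{Z}$, the set $T=\{(i,j),(i,j+1),(i,j+2),(i+1,j+2),(i-1,j+2)\}$ contains a codeword of $C$, and so does every set obtained from such a $T$ by a rotation of $\pi/2$, $\pi$ or $3\pi/2$ radians around the origin.
   Context: The infinite king grid $G=(V,E)$ has $V=\mathbb{Z}^2$, and distinct vertices $(u_1,u_2)$, $(v_1,v_2)$ are adjacent iff $|u_1-v_1|\le1$ and $|u_2-v_2|\le1$. $N[v]$ is the closed neighbourhood of $v$, and for a code (nonempty subset) $C\subseteq V$, $I(C;v)=N[v]\cap C$. A code $C$ is solid-locating-dominating if for all distinct $u,v\in V\setminus C$, $I(C;u)\setminus I(C;v)\ne\emptyset$. *)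

(* Defs.v *)
From Stdlib Require Import ZArith.
Open Scope Z_scope.

Definition vertex := (Z * Z)%type.

Definition closed_nbhd (v u : vertex) : Prop :=
  Z.abs (fst u - fst v) <= 1 /\ Z.abs (snd u - snd v) <= 1.

Definition code (C : vertex -> Prop) : Prop := exists c, C c.

Definition I_set (C : vertex -> Prop) (v : vertex) (w : vertex) : Prop :=
  closed_nbhd v w /\ C w.

Definition solid_locating_dominating (C : vertex -> Prop) : Prop :=
  code C /\
  forall u v : vertex, u <> v -> ~ C u -> ~ C v ->
    exists w, I_set C u w /\ ~ I_set C v w.

Definition rot90 (p : vertex) : vertex := (- snd p, fst p).

Definition T_set (i j : Z) (p : vertex) : Prop :=
  p = (i, j) \/ p = (i, j + 1) \/ p = (i, j + 2) \/
  p = (i + 1, j + 2) \/ p = (i - 1, j + 2).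

Definition rotated_T (k : nat) (i j : Z) (q : vertex) : Prop :=
  exists p, T_set i j p /\ q = Nat.iter k rot90 p.

(* Main.v *)
Require Import Defs.
From Stdlib Require Import ZArith Lia Classical.
Open Scope Z_scope.

Lemma pair_neq (a b x y : Z) : (a, b) <> (x, y) -> a <> x \/ b <> y.
Proof.
  intro N. destruct (Z.eq_dec a x); destruct (Z.eq_dec b y); subst; auto.

Qed.

Theorem lemma10 (C : vertex -> Prop) :
  solid_locating_dominating C ->
  forall (k : nat) (i j : Z), (k < 4)%nat ->
    exists c, C c /\ rotated_T k i j c.
Proof.
  intros [_ H] k i j Hk.
  destruct (classic (exists c, C c /\ rotated_T k i j c)) as [E|Hn]; [exact E|].
  exfalso.
  assert (Hnc : forall p q, T_set i j p -> q = Nat.iter k rot90 p -> ~ C q).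
  { intros p q Hp Hq Cq. apply Hn. exists q. split; [exact Cq|]. exists p; auto. }
  destruct (H (Nat.iter k rot90 (i, j+1)) (Nat.iter k rot90 (i, j))) as [[a b] [[Hu Cw] Hv]].
  - destruct k as [|[|[|[|k]]]]; simpl; try lia; intro E; inversion E; lia.
  - apply (Hnc (i, j+1)); [unfold T_set; tauto | reflexivity].
  - apply (Hnc (i, j)); [unfold T_set; tauto | reflexivity].
  - assert (Hv' : ~ closed_nbhd (Nat.iter k rot90 (i, j)) (a, b)).
    { intro X. apply Hv. split; assumption. }
    clear Hv H Hn.
    assert (E1 : (a,b) <> Nat.iter k rot90 (i, j+2)).
    { intro Q. exact (Hnc (i, j+2) _ ltac:(unfold T_set; tauto) Q Cw). }
    assert (E2 : (a,b) <> Nat.iter k rot90 (i+1, j+2)).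
    { intro Q. exact (Hnc (i+1, j+2) _ ltac:(unfold T_set; tauto) Q Cw). }
    assert (E3 : (a,b) <> Nat.iter k rot90 (i-1, j+2)).
    { intro Q. exact (Hnc (i-1, j+2) _ ltac:(unfold T_set; tauto) Q Cw). }
    clear Hnc Cw.
    unfold closed_nbhd in *.
    destruct k as [|[|[|[|k]]]]; cbn in *; try lia;
    apply pair_neq in E1; apply pair_neq in E2; apply pair_neq in E3; unfold rot90 in *; cbn [fst snd] in *; try lia.

Qed.
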